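(* Let $\varphi : X \to X$ be a morphism in $\mathscr{C}$ and let $\lambda : X \to L$ be a cokernel of $\varphi$. Then $\varphi$ has a dual core inverse if and only if $\varphi$ has a kernel $\kappa : K \to X$ such that both $\kappa\lambda : K \to L$ and $\varphi^{3}\varphi^{*}+\lambda\lambda^{*} : X \to X$ are invertible. In this case, $$\varphi_{\mathrm{core}}=\varphi^{*}(\varphi^{3}\varphi^{*}+\lambda\lambda^{*})^{-1}\varphi^{2}.$$
   Context: $\mathscr{C}$ is an additive category with an involution $*$: a map on morphisms sending $\varphi : X\to Y$ to $\varphi^* : Y \to X$ such that $(\varphi^* )^*=\varphi$, $(\varphi\psi)^*=\psi^*\varphi^*$ and $(\varphi+\phi)^*=\varphi^*+\phi^*$. Composition is written left to right: for $\varphi : X\to Y$ and $\psi : Y\to Z$, $\varphi\psi : X \to Z$ means ''first $\varphi$, then $\psi$''. A kernel of $\varphi : X\to Y$ is a morphism $\kappa : K\to X$ with $\kappa\varphi=0$ such that every $\alpha : M\to X$ with $\alpha\varphi=0$ factors uniquely as $\alpha=\alpha'\kappa$. A cokernel of $\varphi$ is a morphism $\lambda : Y\to L$ with $\varphi\lambda=0$ such that every $\beta : Y\to M$ with $\varphi\beta=0$ factors uniquely as $\beta=\lambda\beta'$. A morphism is invertible if it has a two-sided inverse. For $\varphi : X\to X$, a dual core inverse of $\varphi$ is a morphism $\chi : X\to X$ with $(\chi\varphi)^*=\chi\varphi$, $\chi^2\varphi=\chi$ and $\varphi^2\chi=\varphi$. It is unique when it exists and is denoted $\varphi_{\mathrm{core}}$.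 *)

(* Defs.v *)
From HB Require Import structures.
From mathcomp Require Import all_boot all_order all_algebra.
Set Implicit Arguments. Unset Strict Implicit. Unset Printing Implicit Defensive.
Import GRing.Theory.
Local Open Scope ring_scope.

(* An additive category with involution.  Composition is written
   left-to-right: [mcomp f g] means "first f, then g". *)
Record invAddCat := InvAddCat {
  Ob : Type;
  Mor : Ob -> Ob -> zmodType;
  mcomp : forall X Y Z : Ob, Mor X Y -> Mor Y Z -> Mor X Z;
  idm : forall X : Ob, Mor X X;
  compA : forall (X Y Z W : Ob) (f : Mor X Y) (g : Mor Y Z) (h : Mor Z W),
      mcomp (mcomp f g) h = mcomp f (mcomp g h);
  comp1m : forall (X Y : Ob) (f : Mor X Y), mcomp (idm X) f = f;
  compm1 : forall (X Y : Ob) (f : Mor X Y), mcomp f (idm Y) = f;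
  compDl : forall (X Y Z : Ob) (f f' : Mor X Y) (g : Mor Y Z),
      mcomp (f + f') g = mcomp f g + mcomp f' g;
  compDr : forall (X Y Z : Ob) (f : Mor X Y) (g g' : Mor Y Z),
      mcomp f (g + g') = mcomp f g + mcomp f g';
  zero_ob : exists Z : Ob, idm Z = 0;
  biprod : forall X Y : Ob, exists (S : Ob) (i1 : Mor X S) (i2 : Mor Y S)
      (p1 : Mor S X) (p2 : Mor S Y),
      [/\ mcomp i1 p1 = idm X, mcomp i2 p2 = idm Y, mcomp i1 p2 = 0,
          mcomp i2 p1 = 0 & mcomp p1 i1 + mcomp p2 i2 = idm S];
  star : forall X Y : Ob, Mor X Y -> Mor Y X;
  starK : forall (X Y : Ob) (f : Mor X Y), star (star f) = f;
  starM : forall (X Y Z : Ob) (f : Mor X Y) (g : Mor Y Z),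
      star (mcomp f g) = mcomp (star g) (star f);
  starD : forall (X Y : Ob) (f g : Mor X Y), star (f + g) = star f + star g
}.

Arguments mcomp {i X Y Z}.
Arguments idm {i}.
Arguments Mor : clear implicits.
Arguments Ob : clear implicits.
Arguments star {i X Y}.

Section Defs.
Variable C : invAddCat.

Definition is_kernel (K X Y : Ob C) (phi : Mor C X Y) (kappa : Mor C K X) :=
  mcomp kappa phi = 0 /\
  forall (M : Ob C) (alpha : Mor C M X), mcomp alpha phi = 0 ->
    exists! alpha' : Mor C M K, mcomp alpha' kappa = alpha.

Definition is_cokernel (X Y L : Ob C) (phi : Mor C X Y) (lambda : Mor C Y L) :=
  mcomp phi lambda = 0 /\
  forall (M : Ob C) (beta : Mor C Y M), mcomp phi beta = 0 ->
    exists! beta' : Mor C L M, mcomp lambda beta' = beta.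

Definition is_inverse (X Y : Ob C) (f : Mor C X Y) (g : Mor C Y X) :=
  mcomp f g = idm X /\ mcomp g f = idm Y.

Definition invertible (X Y : Ob C) (f : Mor C X Y) :=
  exists g : Mor C Y X, is_inverse f g.

Definition is_dual_core_inverse (X : Ob C) (phi chi : Mor C X X) :=
  [/\ star (mcomp chi phi) = mcomp chi phi,
      mcomp (mcomp chi chi) phi = chi &
      mcomp (mcomp phi phi) chi = phi].

End Defs.

(* Main.v *)
Require Import Defs.
From mathcomp Require Import all_boot all_order all_algebra.
Import GRing.Theory.
Local Open Scope ring_scope.
Set Implicit Arguments. Unset Strict Implicit.
Local Notation "f ;; g" := (mcomp f g) (at level 40, left associativity).

Lemma comp0m (C : invAddCat) (X Y Z : Ob C) (g : Mor C Y Z) :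
  (0 : Mor C X Y) ;; g = 0.
Proof. apply: (addrI ((0 : Mor C X Y) ;; g)). by rewrite -compDl !addr0. Qed.

Lemma compm0 (C : invAddCat) (X Y Z : Ob C) (f : Mor C X Y) :
  f ;; (0 : Mor C Y Z) = 0.
Proof. apply: (addrI (f ;; (0 : Mor C Y Z))). by rewrite -compDr !addr0. Qed.

Lemma compNm (C : invAddCat) (X Y Z : Ob C) (f : Mor C X Y) (g : Mor C Y Z) :
  (- f) ;; g = - (f ;; g).
Proof. apply: (addrI (f ;; g)). by rewrite -compDl !subrr comp0m. Qed.

Lemma compmN (C : invAddCat) (X Y Z : Ob C) (f : Mor C X Y) (g : Mor C Y Z) :
  f ;; (- g) = - (f ;; g).
Proof. apply: (addrI (f ;; g)). by rewrite -compDr !subrr compm0. Qed.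

Lemma compBm (C : invAddCat) (X Y Z : Ob C) (f f' : Mor C X Y) (g : Mor C Y Z) :
  (f - f') ;; g = f ;; g - f' ;; g.
Proof. by rewrite compDl compNm. Qed.

Lemma compmB (C : invAddCat) (X Y Z : Ob C) (f : Mor C X Y) (g g' : Mor C Y Z) :
  f ;; (g - g') = f ;; g - f ;; g'.
Proof. by rewrite compDr compmN. Qed.

Lemma star0 (C : invAddCat) (X Y : Ob C) : star (0 : Mor C X Y) = 0.
Proof. apply: (addrI (star (0 : Mor C X Y))). by rewrite -starD !addr0. Qed.

Lemma starN (C : invAddCat) (X Y : Ob C) (f : Mor C X Y) : star (- f) = - star f.
Proof. apply: (addrI (star f)). by rewrite -starD !subrr star0. Qed.

Lemma starB (C : invAddCat) (X Y : Ob C) (f g : Mor C X Y) :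
  star (f - g) = star f - star g.
Proof. by rewrite starD starN. Qed.

Lemma star1 (C : invAddCat) (X : Ob C) : star (idm X) = idm X.
Proof.
have := starM (star (idm X)) (idm X).
by rewrite compm1 !starK compm1 => <-.
Qed.

Lemma tail (C : invAddCat) (X Y Z : Ob C) (f : Mor C X Y) (g : Mor C Y Z)
  (k : Mor C X Z) : f ;; g = k -> forall (W : Ob C) (m : Mor C Z W), f ;; (g ;; m) = k ;; m.
Proof. by move=> H W m; rewrite -Defs.compA H. Qed.

Arguments tail {C X Y Z f g k}.
Lemma coker_epi (C : invAddCat) (X Y L M : Ob C) (phi : Mor C X Y)
  (l : Mor C Y L) (g : Mor C L M) :
  is_cokernel phi l -> l ;; g = 0 -> g = 0.
Proof.
move=> [Hl U] Hg.
have [b [_ Hu]] := U M 0 ltac:(by rewrite compm0).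
have e1 := Hu g Hg. have e2 := Hu 0 ltac:(by rewrite compm0). by rewrite -e1 -e2.
Qed.

Lemma coker_epi2 (C : invAddCat) (X Y L M : Ob C) (phi : Mor C X Y)
  (l : Mor C Y L) (g g' : Mor C L M) :
  is_cokernel phi l -> l ;; g = l ;; g' -> g = g'.
Proof.
move=> H E; apply/eqP; rewrite -subr_eq0; apply/eqP.
by apply: (coker_epi H); rewrite compmB E subrr.
Qed.
Lemma tail3 (C : invAddCat) (X Y Z W : Ob C) (f : Mor C X Y) (g : Mor C Y Z)
  (h : Mor C Z W) (k : Mor C X W) :
  f ;; (g ;; h) = k -> forall (V : Ob C) (m : Mor C W V), f ;; (g ;; (h ;; m)) = k ;; m.
Proof. by move=> H V m; rewrite -H !Defs.compA. Qed.

Arguments tail3 {C X Y Z W f g h k}.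
Ltac nrm := rewrite ?Defs.compA.

Section DCI.
Lemma dci_facts (C : invAddCat) (X L : Ob C) (a x : Mor C X X) (l : Mor C X L) :
  a ;; l = 0 -> is_dual_core_inverse a x ->
  [/\ x ;; (a ;; x) = x, a ;; (x ;; a) = a, x ;; l = 0,
      star a ;; star x = x ;; a & x ;; (x ;; a) = x /\ a ;; (a ;; x) = a].
Proof.
move=> Hl [Hs H2 H3]; rewrite Defs.compA in H2; rewrite Defs.compA in H3.
have T3 := tail3 H3; have T2 := tail3 H2.
split.
- by rewrite -{1}H2; nrm; rewrite ?T3 ?H3 ?H2.
- by rewrite -{1}H3; nrm; rewrite ?T2 ?H2 ?H3.
- by rewrite -H2; nrm; rewrite Hl !compm0.
- by rewrite -starM.
- by [].
Qed.
End DCI.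

Lemma uxx (C : invAddCat) (X L : Ob C) (a x : Mor C X X) (l : Mor C X L) :
  a ;; l = 0 -> is_dual_core_inverse a x ->
  (a ;; a ;; a ;; star a + l ;; star l) ;; (star x ;; x) = a ;; a.
Proof.
move=> Hl Hd; have [F1 F2 F3 F4 [H2 H3]] := dci_facts Hl Hd.
rewrite compDl.
have -> : l ;; star l ;; (star x ;; x) = 0.
  by nrm; rewrite -(Defs.compA (star l)) -starM F3 star0 comp0m compm0.
rewrite addr0; nrm. rewrite (tail F4); nrm; rewrite F1 H3 //.
Qed.

Lemma formula (C : invAddCat) (X L : Ob C) (a x : Mor C X X) (l : Mor C X L)
  (v : Mor C X X) :
  a ;; l = 0 -> is_dual_core_inverse a x ->
  v ;; (a ;; a ;; a ;; star a + l ;; star l) = idm X ->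
  x = star a ;; v ;; a ;; a.
Proof.
move=> Hl Hd Hvu; have [F1 F2 F3 F4 [H2 H3]] := dci_facts Hl Hd.
rewrite Defs.compA -(uxx Hl Hd) Defs.compA (tail Hvu) comp1m.
by rewrite -Defs.compA F4 Defs.compA F1.
Qed.

Lemma forward (C : invAddCat) (X L : Ob C) (a x : Mor C X X) (l : Mor C X L) :
  is_cokernel a l -> is_dual_core_inverse a x ->
  exists (K : Ob C) (kappa : Mor C K X),
      [/\ is_kernel a kappa,
          invertible (mcomp kappa l) &
          invertible (mcomp (mcomp (mcomp a a) a) (star a)
                      + mcomp l (star l))].
Proof.
move=> Hcok Hd; have [Hl U] := Hcok.
have [F1 F2 F3 F4 [H2 H3]] := dci_facts Hl Hd.
pose e := idm X - a ;; x. pose f := idm X - x ;; a.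
have E1 : e ;; a = 0 by rewrite /e compBm comp1m Defs.compA F2 subrr.
have E2 : a ;; e = 0 by rewrite /e compmB compm1 H3 subrr.
have E3 : x ;; e = 0 by rewrite /e compmB compm1 F1 subrr.
have E4 : e ;; e = e.
  by rewrite {2}/e compmB compm1 -Defs.compA E1 comp0m subr0.
have Ef1 : f ;; e = e by rewrite /f compBm comp1m Defs.compA E2 compm0 subr0.
have xf : x ;; f = 0 by rewrite /f compmB compm1 H2 subrr.
have Ef2 : e ;; f = f by rewrite /e compBm comp1m Defs.compA xf compm0 subr0.
have Ef3 : a ;; f = 0 by rewrite /f compmB compm1 F2 subrr.
have fl : f ;; l = l by rewrite /f compBm comp1m Defs.compA Hl compm0 subr0.
have [b [Hlb _]] := U X f Ef3.
have Bl : b ;; l = idm L.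
  apply: (coker_epi2 Hcok); by rewrite -Defs.compA Hlb fl compm1.
have Bf : b ;; f = b by rewrite -Hlb -Defs.compA Bl comp1m.
have Bel : b ;; (e ;; l) = idm L.
  by rewrite -Bl -{2}fl -Ef2 Defs.compA fl.
exists L, (b ;; e); split.
- split; first by rewrite Defs.compA E1 compm0.
  move=> M al Hal.
  have ale : al ;; e = al by rewrite /e compmB compm1 -Defs.compA Hal comp0m subr0.
  exists (al ;; (e ;; l)); split.
  + by nrm; rewrite (tail Hlb) Ef1 E4 ale.
  + move=> y Hy; rewrite -Hy; nrm. by rewrite (tail E4) Bel compm1.
- exists (idm L); split; rewrite ?compm1 ?comp1m Defs.compA Bel //.
- pose g := a ;; (x ;; x).
  have ag : a ;; g = a ;; x by rewrite /g (tail3 H3).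
  have ga : g ;; a = a ;; x by rewrite /g !Defs.compA H2.
  have gl : g ;; l = 0 by rewrite /g !Defs.compA F3 !compm0.
  have F4' : forall (Z : Ob C) (m : Mor C X Z), x ;; (a ;; m) = star a ;; (star x ;; m).
    by move=> Z m; rewrite (tail F4) Defs.compA.
  exists (star x ;; (x ;; (g ;; g)) + star e ;; (star b ;; (b ;; e))); split.
  + rewrite compDr (tail3 (uxx Hl Hd)).
    have Hue : (a ;; a ;; a ;; star a + l ;; star l) ;; (star e ;; star b) = l.
      rewrite compDl Defs.compA -(Defs.compA (star a)) -starM E1 star0 comp0m compm0 add0r.
      by rewrite Defs.compA -(Defs.compA (star l)) -!starM Bel star1 compm1.
    rewrite (tail3 Hue) (tail Hlb) Ef1; nrm.
    idtac.
    rewrite (tail3 H3) (tail3 H3) ag.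
    by rewrite /e addrC subrK.
  + rewrite compDl; nrm; rewrite !compDr; nrm.
    rewrite (tail F3) (tail E1) (tail3 Bel) !comp0m !compm0 addr0 add0r comp1m.
    rewrite ?(tail3 H2) ?(tail3 F2) ?(tail3 F1) ?(tail3 H2).
    rewrite F4' -(Defs.compA (star x)) -!starM Hlb.
    by rewrite Ef1 Defs.compA F1 -starD /e addrC subrK star1.
Qed.

Lemma backward (C : invAddCat) (X L K : Ob C) (a : Mor C X X) (l : Mor C X L)
  (k : Mor C K X) :
  is_cokernel a l -> k ;; a = 0 -> invertible (k ;; l) ->
  invertible (a ;; a ;; a ;; star a + l ;; star l) ->
  exists chi : Mor C X X, is_dual_core_inverse a chi.
Proof.
move=> Hcok Hk [t [Ht1 Ht2]] [v [Huv Hvu]]; have [Hl U] := Hcok.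
have [p Hp] : exists p, p = l ;; (t ;; k) by eexists.
have P1 : p ;; a = 0 by rewrite Hp !Defs.compA Hk !compm0.
have P2 : a ;; p = 0 by rewrite Hp -Defs.compA Hl comp0m.
have P3 : p ;; l = l by rewrite Hp !Defs.compA Ht2 compm1.
have Pu : p ;; (a ;; a ;; a ;; star a + l ;; star l) = l ;; star l.
  by rewrite compDr !Defs.compA (tail P1) comp0m add0r -Defs.compA P3.
have Q1 : l ;; (star l ;; v) = p.
  by rewrite -Defs.compA -Pu Defs.compA Huv compm1.
have Up : (a ;; a ;; a ;; star a + l ;; star l) ;; star p = l ;; star l.
  by rewrite compDl !Defs.compA -!starM P1 P3 star0 !compm0 add0r.
have Q2 : v ;; (l ;; star l) = star p.
  by rewrite -Up -Defs.compA Hvu comp1m.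
have W : v ;; l = star k ;; star t.
  have E : (v ;; l - star k ;; star t) ;; star l = 0.
    by rewrite compBm Defs.compA Q2 Hp !starM !Defs.compA subrr.
  have E' : l ;; star (v ;; l - star k ;; star t) = 0.
    by move: (congr1 star E); rewrite starM starK star0.
  have := coker_epi Hcok E'; rewrite starB !starM !starK => /eqP.
  rewrite subr_eq0 => /eqP E2.
  by rewrite -(starK (v ;; l)) starM E2 starM ?starK.
have F1 : star a ;; (v ;; l) = 0 by rewrite W -Defs.compA -starM Hk star0 comp0m.
have R1 : a ;; (a ;; (a ;; (star a ;; v))) = idm X - p.
  by rewrite -Q1 -Huv compDl !Defs.compA addrK.
have kp : k ;; p = k by rewrite Hp -!Defs.compA Ht1 comp1m.
have pp : p ;; p = p by rewrite {1}Hp !Defs.compA kp Hp.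
have R1t : forall (Z : Ob C) (m : Mor C X Z),
    a ;; (a ;; (a ;; (star a ;; (v ;; m)))) = (idm X - p) ;; m.
  by move=> Z m; rewrite -R1 !Defs.compA.
have RA : a ;; (a ;; (star a ;; (v ;; a))) = idm X - p.
  have [D HD] : exists D, D = a ;; (a ;; (star a ;; (v ;; a))) - (idm X - p) by eexists.
  have aD : a ;; D = 0.
    by rewrite HD compmB R1t compBm comp1m P1 subr0 compmB compm1 P2 subr0 subrr.
  have [s [Hs _]] := U X D aD.
  have pD : p ;; D = 0.
    by rewrite HD compmB ?Defs.compA (tail P1) comp0m sub0r compmB compm1 pp subrr oppr0.
  have : D = 0 by rewrite -Hs -{1}P3 Defs.compA Hs pD.
  by move/eqP; rewrite HD subr_eq0 => /eqP.
have RAt : forall (Z : Ob C) (m : Mor C X Z),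
    a ;; (a ;; (star a ;; (v ;; (a ;; m)))) = (idm X - p) ;; m.
  by move=> Z m; rewrite -RA !Defs.compA.
have M1 : (star a ;; (v ;; (a ;; (a ;; a)))) ;; star a = star a.
  apply: esym; rewrite -{1}(compm1 (star a)) -Hvu compDr compDr !Defs.compA.
  by rewrite (tail3 F1) comp0m addr0.
have M1' : a ;; star (star a ;; (v ;; (a ;; (a ;; a)))) = a.
  by move: (congr1 star M1); rewrite starM starK.
have Mm : (star a ;; (v ;; (a ;; (a ;; a)))) ;; star (star a ;; (v ;; (a ;; (a ;; a))))
    = star a ;; (v ;; (a ;; (a ;; a))).
  by rewrite !(Defs.compA (star a)) !(Defs.compA v) !(Defs.compA a) M1'.
have Mh : star (star a ;; (v ;; (a ;; (a ;; a)))) = star a ;; (v ;; (a ;; (a ;; a))).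
  by rewrite -{1}Mm starM starK Mm.
exists (star a ;; v ;; a ;; a); split.
- by rewrite !Defs.compA Mh.
- by rewrite !Defs.compA RAt compBm comp1m (tail P1) comp0m subr0.
- by rewrite !Defs.compA RAt compBm comp1m P1 subr0.
Qed.

Unset Implicit Arguments.

Theorem theorem2p4 (C : invAddCat) (X L : Ob C) (phi : Mor C X X)
    (lambda : Mor C X L) :
  is_cokernel phi lambda ->
  ((exists chi : Mor C X X, is_dual_core_inverse phi chi) <->
   (exists (K : Ob C) (kappa : Mor C K X),
      [/\ is_kernel phi kappa,
          invertible (mcomp kappa lambda) &
          invertible (mcomp (mcomp (mcomp phi phi) phi) (star phi)
                      + mcomp lambda (star lambda))]))
  /\
  (forall (chi : Mor C X X) (v : Mor C X X),
     is_dual_core_inverse phi chi ->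
     is_inverse (mcomp (mcomp (mcomp phi phi) phi) (star phi)
                 + mcomp lambda (star lambda)) v ->
     chi = mcomp (mcomp (mcomp (star phi) v) phi) phi).
Proof.
move=> Hcok; split; first split.
- by move=> [x Hx]; apply: forward Hcok Hx.
- by move=> [K [k [[Hk _] Hinv Hu]]]; apply: backward Hcok Hk Hinv Hu.
- move=> chi v Hd [Huv Hvu]; exact: formula Hcok.1 Hd Hvu.
Qed.
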